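(* Let $U$ be a finite set of users, $R$ a finite set of resources, $w_c$ a user-independent weighted constraint, and $A_1,A_2\subseteq U\times R$ two authorization relations such that $\mathrm{usr}_{A_1}(T)=\mathrm{usr}_{A_2}(T)$ for all $T\subseteq R$. Then $w_c(A_1)=w_c(A_2)$.
   Context: A weighted constraint is a function $w_c:2^{U\times R}\to\mathbb{N}$. It is user-independent if $w_c(\sigma(A))=w_c(A)$ for every $A\subseteq U\times R$ and every permutation $\sigma$ of $U$, where $\sigma(A)=\{(\sigma(u),r):(u,r)\in A\}$. For $A\subseteq U\times R$ and $u\in U$, $A(u)=\{r:(u,r)\in A\}$. The user profile of $A$ is $\mathrm{usr}_A:2^R\to\mathbb{N}$, $\mathrm{usr}_A(T)=|\{u\in U:A(u)=T\}|$. *)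

(* Defs.v *)
From mathcomp Require Import all_boot all_fingroup.
Set Implicit Arguments. Unset Strict Implicit. Unset Printing Implicit Defensive.

Definition perm_rel (U R : finType) (s : {perm U}) (A : {set U * R}) : {set U * R} :=
  [set (s p.1, p.2) | p in A].

Definition user_independent (U R : finType) (w : {set U * R} -> nat) : Prop :=
  forall (A : {set U * R}) (s : {perm U}), w (perm_rel s A) = w A.

Definition res_of (U R : finType) (A : {set U * R}) (u : U) : {set R} :=
  [set r | (u, r) \in A].

Definition usr (U R : finType) (A : {set U * R}) (T : {set R}) : nat :=
  #|[set u | res_of A u == T]|.

(* Main.v *)
Require Import Defs.
From mathcomp Require Import all_boot all_fingroup.

Lemma card_count (T : finType) (P : pred T) : #|P| = count P (enum T).
Proof. by rewrite enumT cardE /enum_mem size_filter. Qed.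

Lemma fiber_perm (U K : finType) (f g : U -> K) :
  (forall k, #|[set u | f u == k]| = #|[set u | g u == k]|) ->
  exists s : {perm U}, forall u, g (s u) = f u.
Proof.
move=> Hk.
pose e := enum U.
pose K1 u := val (enum_rank (f u)). pose K2 u := val (enum_rank (g u)).
have pfg : perm_eq (map f e) (map g e).
  apply/allP => k _; apply/eqP.
  have E (h : U -> K) : count_mem k (map h e) = #|[set u | h u == k]|.
    rewrite count_map card_count /e; apply: eq_count => u /=; by rewrite -[RHS]/(u \in [set u0 | h u0 == k]) inE.
  by rewrite !E Hk.
have pK : perm_eq (map K1 e) (map K2 e).
  have := perm_map (fun k => val (enum_rank k)) pfg.
  by rewrite -!map_comp.
pose s1 := sort (relpre K1 leq) e. pose s2 := sort (relpre K2 leq) e.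
have eqK : map K1 s1 = map K2 s2.
  rewrite -!sort_map; apply/perm_sortP => //; [exact: leq_total|exact: leq_trans|exact: anti_leq].
have u1 : uniq s1 by rewrite sort_uniq enum_uniq.
have u2 : uniq s2 by rewrite sort_uniq enum_uniq.
have sz : size s2 = size s1 by rewrite !size_sort.
have m1 x : x \in s1 by rewrite mem_sort mem_enum.
have ix x : index x s1 < size s1 by rewrite index_mem.
pose h x := nth x s2 (index x s1).
have hinj : injective h.
  move=> x y; rewrite /h (set_nth_default x y) ?sz //.
  move/eqP; rewrite nth_uniq ?sz // => /eqP Hi.
  by rewrite -(nth_index x (m1 x)) Hi (set_nth_default x) ?nth_index.
exists (perm hinj) => u; rewrite permE /h.
apply: enum_rank_inj; apply: val_inj.
rewrite -/(K2 _) -(nth_map u (K2 u)) ?sz // -eqK (nth_map u) //.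
by rewrite nth_index.
Qed.

Theorem lemma4p8 (U R : finType) (w : {set U * R} -> nat)
  (A1 A2 : {set U * R}) :
  user_independent w ->
  (forall T : {set R}, usr A1 T = usr A2 T) ->
  w A1 = w A2.
Proof.
move=> Hw Hu.
have [s Hs] := @fiber_perm U _ (res_of A1) (res_of A2) Hu.
rewrite -(Hw A1 s); congr w.
apply/setP => [[u r]]; apply/imsetP/idP.
  case=> [[v r'] Hin [-> ->]] /=.
  by have := Hs v; move/setP/(_ r'); rewrite !inE Hin.
move=> H; exists ((s^-1)%g u, r) => /=; last by rewrite permKV.
have := Hs ((s^-1)%g u); move/setP/(_ r); rewrite !inE permKV H.
by move=> <-.
Qed.
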